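(* Let $m\ge1$, $\alpha\in(0,1)$, let $F_1,\dots,F_m:[0,1]\to[0,1]$ and fix $t\in[0,1]$. Let $(F(t))_{(1)}\ge\dots\ge(F(t))_{(m)}$ denote the values $F_1(t),\dots,F_m(t)$ sorted decreasingly and, for $1\le j\le m$, $\tilde F_j(t)=1-\big(\prod_{j'=1}^{j}(1-(F(t))_{(j')})\big)^{1/j}$. For $\ell\in\{1,\dots,m\}$ and $i\in\{1,\dots,\lfloor\alpha\ell\rfloor+1\}$ consider $$Q(\ell,i)=P\Big(\mathbf{Bin}\big[m-\ell+i,\tilde F_{m-\ell+i}(t)\big]\ge i\Big)=P\Big(\mathbf{Bin}\big[m-\ell+i,1-\tilde F_{m-\ell+i}(t)\big]\le m-\ell\Big).$$ Then $Q(\ell,i)$ is non-increasing in $i\in\{1,\dots,\lfloor\alpha\ell\rfloor+1\}$ and non-increasing in $\ell\in\{1,\dots,m\}$.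
   Context: $\mathbf{Bin}[n,p]$ denotes a binomial random variable with $n$ trials and success probability $p$. *)

(* Defs.v *)
From mathcomp Require Import all_boot all_order all_algebra.
From mathcomp Require Import all_classical all_reals all_analysis.
Set Implicit Arguments. Unset Strict Implicit. Unset Printing Implicit Defensive.
Import Order.TTheory GRing.Theory Num.Theory.
Local Open Scope ring_scope.

Definition binom_tail_ge {R : realType} (n : nat) (p : R) (i : nat) : R :=
  \sum_(k < n.+1 | (i <= k)%N) ('C(n, k))%:R * p ^+ k * (1 - p) ^+ (n - k).

(* the values F_1(t),...,F_m(t) sorted decreasingly: (F(t))_(j) = nth 0 (sortedF F t) (j-1) *)
Definition sortedF {R : realType} {m : nat} (F : 'I_m -> R -> R) (t : R) : seq R :=
  sort (fun x y : R => y <= x) [seq F k t | k <- enum 'I_m].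

Definition tildeF {R : realType} {m : nat} (F : 'I_m -> R -> R) (t : R) (j : nat) : R :=
  1 - powR (\prod_(j' < j) (1 - nth 0 (sortedF F t) j')) (j%:R)^-1.

Definition Q {R : realType} {m : nat} (F : 'I_m -> R -> R) (t : R) (l i : nat) : R :=
  binom_tail_ge (m - l + i) (tildeF F t (m - l + i)) i.

(* Main.v *)
Require Import Defs.
From mathcomp Require Import all_boot all_order all_algebra.
From mathcomp Require Import all_classical all_reals all_analysis.
From mathcomp Require Import ring lra zify.
Set Implicit Arguments. Unset Strict Implicit. Unset Printing Implicit Defensive.
Import Order.TTheory GRing.Theory Num.Theory.
Local Open Scope ring_scope.


Section PT.
Variable R : realType.

Fixpoint PT (ps : seq R) (i : nat) : R :=
  match ps with
  | [::] => (i == 0)%:R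
  | p :: ps' => p * PT ps' i.-1 + (1 - p) * PT ps' i
  end.

Definition okp (p : R) := (0 <= p) && (p <= 1).

Lemma PT_anti ps i : all okp ps -> PT ps i.+1 <= PT ps i.
Proof.
elim: ps i => [|p ps IH] i /=; first by case: i.
case/andP=> /andP[p0 p1] Hall.
have h1 := IH i Hall.
have h2 : PT ps i <= PT ps i.-1 by case: i {h1} => [|i] //=; exact: IH.
rewrite lerD // ler_wpM2l //; lra.
Qed.

Lemma PT_add ps p i : okp p -> all okp ps -> PT ps i <= PT (p :: ps) i.
Proof.
move=> /andP[p0 p1] Hall /=.
have h2 : PT ps i <= PT ps i.-1 by case: i => [|i] //=; exact: PT_anti.
nra.
Qed.

Lemma PT_addS ps p i : okp p -> all okp ps -> PT (p :: ps) i.+1 <= PT ps i.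
Proof.
move=> /andP[p0 p1] Hall /=.
have h2 := PT_anti i Hall.
nra.
Qed.

Lemma PT_monop ps p q i : all okp ps -> p <= q -> PT (p :: ps) i <= PT (q :: ps) i.
Proof.
move=> Hall pq /=.
have h2 : PT ps i <= PT ps i.-1 by case: i => [|i] //=; exact: PT_anti.
nra.
Qed.

Lemma PT_prefix pre l1 l2 : all okp pre -> (forall i, PT l1 i <= PT l2 i) ->
  forall i, PT (pre ++ l1) i <= PT (pre ++ l2) i.
Proof.
elim: pre => [|p pre IH] //= /andP[/andP[p0 p1] Hall] H i.
have := IH Hall H i; have := IH Hall H i.-1; nra.
Qed.

Lemma okp_nseq n p : okp p -> all okp (nseq n p).
Proof. by move=> h; elim: n => //= n ->; rewrite h. Qed.

Lemma PT_nseq_mono n p q i : okp p -> okp q -> p <= q ->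
  PT (nseq n p) i <= PT (nseq n q) i.
Proof.
move=> hp hq pq; elim: n i => [|n IH] i //=.
apply: (le_trans _ (@PT_monop (nseq n q) p q i (okp_nseq n hq) pq)) => /=.
move: hp => /andP[p0 p1].
have := IH i; have := IH i.-1; nra.
Qed.

(* pair step: failure probs x y -> x' y' with same product, smaller sum *)
Lemma PT_pair a b a' b' ps i : all okp ps ->
  (1 - a) * (1 - b) = (1 - a') * (1 - b') -> a * b <= a' * b' ->
  PT (a :: b :: ps) i <= PT (a' :: b' :: ps) i.
Proof.
move=> Hall e ab /=.
have h1 : PT ps i <= PT ps i.-1 by case: i => [|i] //=; exact: PT_anti.
have h2 : PT ps i.-1 <= PT ps i.-1.-1 by case: i.-1 => [|j] //=; exact: PT_anti.
move: h1 h2; move: (PT ps i.-1.-1) (PT ps i.-1) (PT ps i) => u v w h1 h2.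
have E : forall x y : R, x * (y * u + (1 - y) * v) + (1 - x) * (y * v + (1 - y) * w)
  = x * y * (u - v) + v + (1 - x) * (1 - y) * (w - v) by move=> x y; ring.
rewrite !E e lerD2r lerD2r; apply: ler_wpM2r => //; lra.
Qed.

End PT.

Section Chain.
Variable R : realType.

Lemma nseqS_cat (x : R) m s : nseq m.+1 x ++ s = nseq m x ++ x :: s.
Proof. by elim: m => //= m ->. Qed.

Lemma okp1m (x : R) : 0 <= x <= 1 -> okp (1 - x).
Proof. by case/andP=> ? ?; rewrite /okp; apply/andP; split; lra. Qed.

Lemma chain n (c d : R) i : (0 < n)%N -> 0 <= c -> 0 <= d -> d <= 1 ->
  c ^+ n = d ^+ n.+1 -> PT (nseq n (1 - c)) i <= PT (nseq n.+1 (1 - d)) i.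
Proof.
move=> n0 c0 d0 d1 e.
have cd : c <= d.
  rewrite -(ler_pXn2r n0) ?nnegrE // e exprS.
  by rewrite -[leRHS]mul1r ler_wpM2r // exprn_ge0.
have c1 : c <= 1 by lra.
have okc : okp (1 - c) by apply: okp1m; lra.
have okd : okp (1 - d) by apply: okp1m; lra.
have [dz|dpos] := eqVneq d 0.
  have cz : c = 0 by apply/eqP; move: cd; rewrite dz; lra.
  rewrite dz cz subr0 /=.
  have ok1 : okp (1:R) by rewrite /okp ler01 lexx.
  exact: PT_add i ok1 (okp_nseq n ok1).
have dgt : 0 < d by rewrite lt_def dpos d0.
pose r m := (c / d) ^+ m.
have cd0 : 0 <= c / d by rewrite divr_ge0.
have cd1 : c / d <= 1 by rewrite ler_pdivrMr // mul1r.
have rn : r n = d.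
  rewrite /r expr_div_n e exprS mulfK //.
  by rewrite expf_eq0 negb_and dpos orbT.
have rge : forall m, (m <= n)%N -> d <= r m.
  by move=> m mn; rewrite -rn /r; apply: ler_wiXn2l.
have r01 : forall m, 0 <= r m <= 1.
  by move=> m; rewrite /r exprn_ge0 //= exprn_ile1.
pose L m := nseq m (1 - d) ++ (1 - r m) :: nseq (n - m) (1 - c).
have step : forall m, (m < n)%N -> forall j, PT (L m) j <= PT (L m.+1) j.
  move=> m mn j.
  rewrite /L -(subnSK mn) nseqS_cat /=.
  apply: PT_prefix; first exact: okp_nseq.
  move=> k; apply: PT_pair; first exact: okp_nseq.
    rewrite /r exprSr; field; exact: dpos.
  have hr := rge m (ltnW mn).
  have hrr : r m.+1 * d = r m * c by rewrite /r exprSr; field.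
  have := r01 m.
  nra.
have main : forall m, (m <= n)%N -> PT (L 0) i <= PT (L m) i.
  elim=> [|m IH] mn //.
  exact: le_trans (IH (ltnW mn)) (step m mn i).
have := main n (leqnn n).
rewrite /L subnn /= rn -nseqS_cat cats0 subn0 /r expr0 subrr mul0r add0r subr0 mul1r.
by [].
Qed.

End Chain.

Section Bin.
Variable R : realType.

Lemma btgE n (p : R) i : binom_tail_ge n p i =
  \sum_(k < n.+1) (i <= k)%N%:R * ('C(n, k))%:R * p ^+ k * (1 - p) ^+ (n - k).
Proof.
rewrite /binom_tail_ge big_mkcond /=; apply: eq_bigr => k _.
by case: ifP; rewrite ?mul1r ?mul0r.
Qed.

Lemma PT_bin n (p : R) i : PT (nseq n p) i = binom_tail_ge n p i.
Proof.
elim: n i => [|n IH] i.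
  by rewrite btgE big_ord1 /= bin0 subnn !expr0 !mulr1; case: i.
rewrite /= !IH !btgE.
rewrite [in RHS]big_ord_recl /= bin0 subn0 expr0 mulr1.
under [in RHS]eq_bigr do rewrite /bump /= add1n binS natrD.
rewrite [X in _ = _ + X](_ : _ = \sum_(k < n.+1) (i <= k.+1)%N%:R * 'C(n, k.+1)%:R * p ^+ k.+1 * (1 - p) ^+ (n - k)
   + p * \sum_(k < n.+1) (i.-1 <= k)%N%:R * 'C(n, k)%:R * p ^+ k * (1 - p) ^+ (n - k)); last first.
  rewrite big_distrr -big_split /=; apply: eq_bigr => k _.
  have -> : (i.-1 <= k)%N = (i <= k.+1)%N by case: i.
  rewrite exprS; ring.
rewrite addrA addrC; congr (_ + _).
rewrite [in RHS]big_ord_recr /= bin_small // mulr0 !mul0r addr0.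
rewrite big_distrr big_ord_recl /= bin0 subn0.
congr (_ + _); first by rewrite expr0 exprS; ring.
apply: eq_bigr => k _; rewrite /bump /= add1n.
rewrite -(subnSK (ltn_ord k)) [(1 - p) ^+ (_.+1)]exprS; ring.
Qed.

End Bin.

Section Main.
Variable R : realType.
Variable m : nat.
Variable F : 'I_m -> R -> R.
Variable t : R.
Hypothesis HF : forall k, 0 <= F k t <= 1.

Let S := sortedF F t.
Let a n := \prod_(j < n) (1 - nth 0 S j).
Let g n := powR (a n) (n%:R)^-1.

Lemma root_le (x y : R) k : (0 < k)%N -> 0 <= x -> 0 <= y -> x ^+ k <= y ^+ k -> x <= y.
Proof. by move=> k0 x0 y0; rewrite (ler_pXn2r k0) ?nnegrE. Qed.

Lemma powR_root (x : R) k : (0 < k)%N -> 0 <= x -> (powR x (k%:R)^-1) ^+ k = x.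
Proof.
move=> k0 x0; rewrite -powR_mulrn ?powR_ge0 // -powRrM mulVf ?powRr1 //.
by rewrite pnatr_eq0 -lt0n.
Qed.

Lemma nth01 j : 0 <= nth 0 S j <= 1.
Proof.
case: (ltnP j (size S)) => hj; last by rewrite nth_default // lexx ler01.
have := mem_nth 0 hj; rewrite /S /sortedF mem_sort => /mapP [k _ ->]; exact: HF.
Qed.

Lemma a01 n : 0 <= a n <= 1.
Proof.
rewrite /a; elim: n => [|n IH]; first by rewrite big_ord0 ler01 lexx.
rewrite big_ord_recr /=; have := nth01 n; move: IH; set u := \prod_(_ < _) _.
move=> /andP[? ?] /andP[? ?]; apply/andP; split; nra.
Qed.

Lemma aS n : a n.+1 = a n * (1 - nth 0 S n).
Proof. by rewrite /a big_ord_recr. Qed.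

Lemma g_pow n : (0 < n)%N -> g n ^+ n = a n.
Proof. by move=> n0; rewrite /g powR_root // (andP (a01 n)).1. Qed.

Lemma g01 n : 0 <= g n <= 1.
Proof.
case: n => [|n]; first by rewrite /g invr0 powRr0 ler01 lexx.
rewrite /g powR_ge0 /=; apply: (@root_le _ _ n.+1) => //; first exact: powR_ge0.
by rewrite expr1n g_pow // (andP (a01 _)).2.
Qed.

Lemma sortedS j n : (j < n)%N -> nth 0 S n <= nth 0 S j.
Proof.
move=> jn; case: (ltnP n (size S)) => hn; last first.
  by rewrite (nth_default 0 hn) (andP (nth01 j)).1.
have srt : sorted (fun x y : R => y <= x) S.
  by apply: sort_sorted => x y; rewrite orbC le_total.
have tr : transitive (fun x y : R => y <= x).
  by move=> x y z /= h1 h2; exact: le_trans h2 h1.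
have H := @sorted_leq_nth _ (fun x y : R => y <= x) tr (fun x => lexx x) 0 S srt.
apply: (H j n) => //; last exact: ltnW.
by rewrite inE (ltn_trans jn hn).
Qed.

Lemma okg n : okp (1 - g n).
Proof. by apply: okp1m; exact: g01. Qed.

Lemma lstep n i : (0 < n)%N ->
  PT (nseq n (1 - g n)) i <= PT (nseq n.+1 (1 - g n.+1)) i.
Proof.
move=> n0.
pose d := powR (a n) (n.+1%:R)^-1.
have d0 : 0 <= d by exact: powR_ge0.
have dp : d ^+ n.+1 = a n by rewrite powR_root // (andP (a01 n)).1.
have d1 : d <= 1.
  by apply: (@root_le _ _ n.+1) => //; rewrite expr1n dp (andP (a01 n)).2.
have e : g n ^+ n = d ^+ n.+1 by rewrite g_pow // dp.
apply: (le_trans (chain i n0 (andP (g01 n)).1 d0 d1 e)).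
apply: PT_nseq_mono; [by apply: okp1m; rewrite d0 d1 | exact: okg |].
have : g n.+1 <= d.
  apply: (@root_le _ _ n.+1) => //; first exact: (andP (g01 _)).1.
  rewrite g_pow // dp aS; have := a01 n; have := nth01 n.
  move=> /andP[? ?] /andP[? ?]; nra.
lra.
Qed.

Lemma istep n i : (0 < n)%N ->
  PT (nseq n.+1 (1 - g n.+1)) i.+1 <= PT (nseq n (1 - g n)) i.
Proof.
move=> n0.
set x := 1 - nth 0 S n.
have x0 : 0 <= x by have := nth01 n; rewrite /x; lra.
have gx : g n <= x.
  apply: (@root_le _ _ n) => //; first exact: (andP (g01 _)).1.
  rewrite g_pow // /a.
  have -> : x ^+ n = \prod_(j < n) x by rewrite prodr_const card_ord.
  apply: ler_prod => j _.
  apply/andP; split; first by have := nth01 j; lra.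
  by rewrite /x; have := sortedS (ltn_ord j); lra.
have gg : g n <= g n.+1.
  apply: (@root_le _ _ n.+1) => //; [exact: (andP (g01 _)).1 | exact: (andP (g01 _)).1 |].
  rewrite g_pow // aS -/x exprS mulrC g_pow //.
  by apply: ler_wpM2l => //; exact: (andP (a01 _)).1.
apply: (le_trans (PT_nseq_mono _ _ (okg _) (okg n) _)); first lra.
exact: PT_addS (okg n) (okp_nseq _ (okg n)).
Qed.

End Main.

Unset Implicit Arguments.
Theorem lemma7p2 (R : realType) (m : nat) (alpha : R) (F : 'I_m -> R -> R) (t : R) :
  (1 <= m)%N ->
  0 < alpha < 1 ->
  (forall k x, 0 <= x <= 1 -> 0 <= F k x <= 1) ->
  0 <= t <= 1 ->
  (* non-increasing in i *)
  (forall (l i1 i2 : nat), (1 <= l <= m)%N ->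
     (1 <= i1)%N -> (i1 <= i2)%N ->
     (i2%:Z <= Num.floor (alpha * l%:R) + 1)%R ->
     Q F t l i2 <= Q F t l i1) /\
  (* non-increasing in l *)
  (forall (l1 l2 i : nat), (1 <= l1)%N -> (l1 <= l2)%N -> (l2 <= m)%N ->
     (1 <= i)%N ->
     (i%:Z <= Num.floor (alpha * l1%:R) + 1)%R ->
     (i%:Z <= Num.floor (alpha * l2%:R) + 1)%R ->
     Q F t l2 i <= Q F t l1 i).
Proof.
move=> _ _ HF0 ht.
have HF : forall k, 0 <= F k t <= 1 by move=> k; exact: HF0.
have Qeq : forall l i, Q F t l i = PT (nseq (m - l + i)
    (1 - powR (\prod_(j < m - l + i) (1 - nth 0 (sortedF F t) j)) ((m - l + i)%:R)^-1)) i.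
  by move=> l i; rewrite /Q -PT_bin.
split.
  move=> l i1 i2 _ hi1 hi12 _.
  rewrite -(subnKC hi12); elim: (i2 - i1)%N => [|k IH]; first by rewrite addn0.
  apply: le_trans IH; rewrite !Qeq !addnS.
  apply: (istep HF); rewrite addn_gt0; apply/orP; right.
  by rewrite addn_gt0 hi1.
move=> l1 l2 i _ h12 h2m hi _ _.
rewrite !Qeq.
have -> : (m - l1 + i = (m - l2 + i) + (l2 - l1))%N.
  lia.
have : (0 < m - l2 + i)%N by rewrite addn_gt0 hi orbT.
move: (m - l2 + i)%N => n n0.
elim: (l2 - l1)%N => [|k IH]; first by rewrite addn0.
apply: le_trans IH _; rewrite addnS; apply: (lstep HF).
by rewrite addn_gt0 n0.
Qed.
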